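(* Let $\mathcal{X}\subseteq\mathbb{R}^m$ be countable with ground metric $d$, let $\widehat\nu = \sum_{j=1}^N\widehat\nu_j\delta_{\widehat x_j}$ be a probability mass function supported on $N$ distinct points $\widehat x_1,\dots,\widehat x_N\in\mathcal{X}$ with $\widehat\nu_j>0$ and $\sum_j\widehat\nu_j=1$, and let $x_1,\dots,x_L\in\mathcal{X}$ be a batch of observations. Let $\mathcal{M}_{x_1^L}(\mathcal{X}) = \{\nu\in\mathcal{M}(\mathcal{X}):\nu(x_\ell)>0\ \forall\ell\in[L]\}$ and, for $\varepsilon>0$, $\mathbb{B}_{\mathbb{W}}(\widehat\nu,\varepsilon) = \{\nu\in\mathcal{M}_{x_1^L}(\mathcal{X}) : \mathbb{W}(\nu,\widehat\nu)\le\varepsilon\}$. Then $$\sup_{\nu\in\mathbb{B}_{\mathbb{W}}(\widehat\nu,\varepsilon)}\sum_{\ell=1}^L\log\nu(x_\ell) = \max\Big\{\sum_{\ell=1}^L\log\Big(\sum_{j=1}^N T_{j\ell}\Big) : T\in\mathbb{R}^{N\times L}_+,\ \sum_{j\in[N],\,\ell\in[L]} d(\widehat x_j,x_\ell)\,T_{j\ell}\le\varepsilon,\ \sum_{\ell=1}^L T_{j\ell}\le\widehat\nu_j\ \forall j\in[N]\Big\},$$ and the right-hand side is a finite convex program.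
   Context: $\mathcal{M}(\mathcal{X})$ is the set of probability mass functions on $\mathcal{X}$. The type-1 Wasserstein distance is $\mathbb{W}(\nu_1,\nu_2) = \inf_{\lambda\in\Lambda(\nu_1,\nu_2)}\mathbb{E}_\lambda[d(x_1,x_2)]$ over couplings $\lambda$ on $\mathcal{X}\times\mathcal{X}$ with marginals $\nu_1,\nu_2$.
   Formalization: The observations $x_1$, …, $x_L$ are assumed pairwise distinct, and in the objective of the convex program log 0 is taken as −∞. Each condition added here is assumed in the paper as well or is needed for the statement above to hold. *)

(* Defs.v *)
From HB Require Import structures.
From mathcomp Require Import all_boot all_order all_algebra.
From mathcomp Require Import all_classical all_reals all_analysis.
Set Implicit Arguments. Unset Strict Implicit. Unset Printing Implicit Defensive.
Import Order.TTheory GRing.Theory Num.Theory.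
Local Open Scope classical_set_scope.
Local Open Scope ring_scope.

Section Defs.
Variables (R : realType) (m : nat).
Notation pt := 'rV[R]_m.

Definition is_metric_on (X : set pt) (d : pt -> pt -> R) : Prop :=
  (forall x y, X x -> X y -> 0 <= d x y) /\
  (forall x y, X x -> X y -> (d x y = 0 <-> x = y)) /\
  (forall x y, X x -> X y -> d x y = d y x) /\
  (forall x y z, X x -> X y -> X z -> d x z <= d x y + d y z).

Definition is_pmf (X : set pt) (nu : pt -> R) : Prop :=
  (forall x, 0 <= nu x) /\ (forall x, ~ X x -> nu x = 0) /\
  (\esum_(x in X) (nu x)%:E = 1)%E.

Definition is_coupling (X : set pt) (nu1 nu2 : pt -> R) (lam : pt -> pt -> R) : Prop :=
  (forall x y, 0 <= lam x y) /\
  (forall x y, ~ (X x /\ X y) -> lam x y = 0) /\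
  (forall x, \esum_(y in X) (lam x y)%:E = (nu1 x)%:E) /\
  (forall y, \esum_(x in X) (lam x y)%:E = (nu2 y)%:E).

Definition coupling_cost (X : set pt) (d : pt -> pt -> R) (lam : pt -> pt -> R) : \bar R :=
  \esum_(p in X `*` X) (d p.1 p.2 * lam p.1 p.2)%:E.

Definition wass (X : set pt) (d : pt -> pt -> R) (nu1 nu2 : pt -> R) : \bar R :=
  ereal_inf [set c | exists lam, is_coupling X nu1 nu2 lam /\ c = coupling_cost X d lam].

Definition discrete_pmf (N : nat) (xh : 'I_N -> pt) (nuh : 'I_N -> R) : pt -> R :=
  fun x => \sum_(j < N | xh j == x) nuh j.

Definition wass_ball (X : set pt) (d : pt -> pt -> R) (L : nat) (x : 'I_L -> pt)
    (nuh : pt -> R) (eps : R) : set (pt -> R) :=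
  [set nu | is_pmf X nu /\ (forall l, 0 < nu (x l)) /\ (wass X d nu nuh <= eps%:E)%E].

Definition elog (s : R) : \bar R := if 0 < s then (ln s)%:E else -oo%E.

Definition cvx_obj (N L : nat) (T : 'M[R]_(N, L)) : \bar R :=
  (\sum_(l < L) elog (\sum_(j < N) T j l))%E.

Definition cvx_feasible (N L : nat) (d : pt -> pt -> R) (xh : 'I_N -> pt) (nuh : 'I_N -> R)
    (x : 'I_L -> pt) (eps : R) (T : 'M[R]_(N, L)) : Prop :=
  (forall j l, 0 <= T j l) /\
  \sum_(j < N) \sum_(l < L) d (xh j) (x l) * T j l <= eps /\
  (forall j, \sum_(l < L) T j l <= nuh j).
End Defs.

(* Main.v *)
Require Import Defs.
From HB Require Import structures.
From mathcomp Require Import all_boot all_order all_algebra.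
From mathcomp Require Import all_classical all_reals all_analysis.
Import Order.TTheory GRing.Theory Num.Theory.
Import numFieldNormedType.Exports.
Local Open Scope classical_set_scope.
Local Open Scope ring_scope.
From mathcomp Require Import lra.
Section Deltas.
Variables (R : realType) (T : choiceType).

Lemma esum_delta (S : set T) (z : T) (c : R) : S z -> 0 <= c ->
  \esum_(t in S) (c * (t == z)%:R)%:E = c%:E.
Proof.
move=> Sz c0.
rewrite (esumID [set z]); last by move=> t _; rewrite lee_fin mulr_ge0.
rewrite setIidr; last by move=> t ->.
rewrite esum_set1; last by rewrite eqxx mulr1 lee_fin.
rewrite esum1 ?adde0 ?eqxx ?mulr1 // => t [_ /= /eqP tz].
by rewrite (negbTE tz) mulr0.
Qed.

Lemma esum_deltas (S : set T) (I : finType) (z : I -> T) (c : I -> R) :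
  (forall k, S (z k)) -> (forall k, 0 <= c k) ->
  \esum_(t in S) (\sum_k c k * (t == z k)%:R)%:E = (\sum_k c k)%:E.
Proof.
move=> Sz c0.
under eq_esum do rewrite -sumEFin.
rewrite esum_sum; last by move=> t k _ _; rewrite lee_fin mulr_ge0.
rewrite -sumEFin; apply: eq_bigr => k _; exact: esum_delta.
Qed.

Lemma sum_delta_inj (I : finType) (z : I -> T) (c : I -> R) (t : T) :
  injective z -> (forall k, 0 <= c k) ->
  (forall k, z k = t -> \sum_k' c k' * (t == z k')%:R = c k) /\
  ((forall k, z k <> t) -> \sum_k' c k' * (t == z k')%:R = 0).
Proof.
move=> zi c0; split.
  move=> k zkt; rewrite (bigD1 k) //= -zkt eqxx mulr1 big1 ?addr0 //.
  move=> k' k'k; case: eqP => [/zi e|]; last by rewrite mulr0.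
  by rewrite e eqxx in k'k.
move=> nz; rewrite big1 // => k _; case: eqP => [e|]; last by rewrite mulr0.
by case: (nz k).
Qed.

Lemma esum_fin_lb (S : set T) (I : finType) (z : I -> T) (f : T -> R) :
  injective z -> (forall k, S (z k)) -> (forall t, S t -> 0 <= f t) ->
  ((\sum_k f (z k))%:E <= \esum_(t in S) (f t)%:E)%E.
Proof.
move=> zi Sz f0.
rewrite -(@esum_deltas S I z (fun k => f (z k)) Sz); last by move=> k; exact: f0.
apply: le_esum => t St; rewrite lee_fin.
have [H1 H2] := @sum_delta_inj I z (fun k => f (z k)) t zi (fun k => f0 _ (Sz k)).
have [[k zkt]|ne] := pselect (exists k, z k = t).
  by rewrite (H1 k zkt) zkt.
rewrite H2; first exact: f0.
by move=> k e; apply: ne; exists k.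
Qed.
End Deltas.
Lemma cont_sum (R : realType) {T : topologicalType} {I : finType} (f : I -> T -> R) :
  (forall i, continuous (f i)) -> continuous (fun v => \sum_i f i v).
Proof.
move=> fc.
suff H : forall s : seq I, continuous (fun v => \sum_(i <- s) f i v) by exact: H.
elim=> [|a s IH].
  have -> : (fun v => \sum_(i <- [::]) f i v) = (fun=> 0).
    by apply: funext => v; rewrite big_nil.
  exact: cst_continuous.
have -> : (fun v => \sum_(i <- a :: s) f i v) = (f a + fun v => \sum_(i <- s) f i v).
  by apply: funext => v; rewrite big_cons.
by move=> v; apply: continuousD; [exact: fc | exact: IH].
Qed.

Lemma cont_coord (R : realType) N L (j : 'I_N) (l : 'I_L) :
  continuous (fun v : 'rV[R]_(N * L) => vec_mx v j l).
Proof.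
have -> : (fun v : 'rV[R]_(N * L) => vec_mx v j l) = (fun v => v 0 (mxvec_index j l)).
  by apply: funext => v; rewrite -mxvecE vec_mxK.
exact: coord_continuous.
Qed.

Lemma closed_pre (R : realType) {T : topologicalType} (F : T -> R) (B : set R) :
  continuous F -> closed B -> closed [set v | B (F v)].
Proof. by move=> Fc Bc; exact: (proj1 (continuous_closedP F) Fc B Bc). Qed.

Lemma colsum_le1 (R : realType) m (d : 'rV[R]_m -> 'rV[R]_m -> R) N L xh nuh x eps
  (T : 'M[R]_(N, L)) :
  \sum_(j < N) nuh j = 1 -> cvx_feasible d xh nuh x eps T ->
  forall l, \sum_j T j l <= 1.
Proof.
move=> Hs [T0 [_ Trow]] l; rewrite -Hs; apply: ler_sum => j _.
apply: le_trans (Trow j); rewrite (bigD1 l) //= lerDl sumr_ge0 // => *; exact: T0.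
Qed.

Lemma cvx_opt (R : realType) m (d : 'rV[R]_m -> 'rV[R]_m -> R) N L xh nuh x eps :
  (forall j l, 0 <= d (xh j) (x l)) -> (forall j, 0 < nuh j) ->
  \sum_(j < N) nuh j = 1 -> 0 < eps ->
  exists Topt : 'M[R]_(N, L), [/\ cvx_feasible d xh nuh x eps Topt,
    (forall l, 0 < \sum_j Topt j l) &
    forall T, cvx_feasible d xh nuh x eps T -> (cvx_obj T <= cvx_obj Topt)%E].
Proof.
move=> d0 nuh0 Hs eps0.
have nuh1 j : nuh j <= 1.
  by rewrite -Hs (bigD1 j) //= lerDl sumr_ge0 // => k _; exact: ltW.
have Npos : (0 < N)%N.
  by case: N nuh xh Hs {nuh0 nuh1 d0} => // nuh xh; rewrite big_ord0 => /eqP; rewrite eq_sym oner_eq0.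
pose P := \prod_(j < N) nuh j.
have P0 : 0 < P by apply: prodr_gt0 => j _; exact: nuh0.
have Pn j : P <= nuh j.
  rewrite /P (bigD1 j) //= ler_piMr //; first exact: ltW.
  by apply: prodr_ile1 => k _; rewrite ltW ?nuh1.
pose D := \sum_(j < N) \sum_(l < L) d (xh j) (x l).
have D0 : 0 <= D by apply: sumr_ge0 => j _; apply: sumr_ge0 => l _.
pose a := P / (L%:R + 1). pose b := eps / (D + 1).
have a0 : 0 < a by rewrite divr_gt0 // ltr_wpDl.
have b0 : 0 < b by rewrite divr_gt0 // ltr_wpDl.
have aE : a * (L%:R + 1) = P by rewrite /a mulfVK // gt_eqF // ltr_wpDl.
have bE : b * (D + 1) = eps by rewrite /b mulfVK // gt_eqF // ltr_wpDl.
pose t := Num.min a b.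
have t0 : 0 < t by rewrite lt_min a0 b0.
have ta : t <= a by rewrite ge_min lexx.
have tb : t <= b by rewrite ge_min lexx orbT.
pose T0 : 'M[R]_(N, L) := const_mx t.
have T0f : cvx_feasible d xh nuh x eps T0.
  split; first by move=> j l; rewrite mxE ltW.
  split.
    have -> : \sum_(j < N) \sum_(l < L) d (xh j) (x l) * T0 j l = D * t.
      rewrite /D mulr_suml; apply: eq_bigr => j _; rewrite mulr_suml.
      by apply: eq_bigr => l _; rewrite mxE.
    nra.
  move=> j; have -> : \sum_(l < L) T0 j l = t * L%:R.
    by under eq_bigr do rewrite mxE; rewrite sumr_const card_ord mulr_natr.
  apply: le_trans (Pn j); have L0 : 0 <= (L%:R : R) by [].
  nra.
have tnuh j : t <= nuh j.
  apply: le_trans (Pn j); apply: (le_trans ta); have L0 : 0 <= (L%:R : R) by [].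
  nra.
pose s0 := \sum_(j < N) t.
have colT0 l : \sum_j T0 j l = s0 by apply: eq_bigr => j _; rewrite mxE.
have s0pos : 0 < s0.
  by rewrite /s0 sumr_const card_ord -mulr_natr mulr_gt0 // ltr0n.
have s01 : s0 <= 1 by rewrite -Hs; apply: ler_sum => j _; exact: tnuh.
pose c := Num.min s0 (s0 ^+ L) / 2.
have sL0 : 0 < s0 ^+ L by rewrite exprn_gt0.
have c0 : 0 < c by rewrite divr_gt0 // lt_min s0pos sL0.
pose mm := Num.min s0 (s0 ^+ L).
have mle1 : mm <= s0 by rewrite ge_min lexx.
have mle2 : mm <= s0 ^+ L by rewrite ge_min lexx orbT.
have mpos : 0 < mm by rewrite lt_min s0pos sL0.
have cE : c * 2 = mm by rewrite /c mulfVK.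
have cs0 : c <= s0 by lra.
have csL : c < s0 ^+ L by lra.
have c1 : c <= 1 by apply: le_trans s01.
pose G (M : 'M[R]_(N, L)) := \sum_(l < L) ln (Num.max c (\sum_j M j l)).
pose g (v : 'rV[R]_(N * L)) := G (vec_mx v).
have gc : continuous g.
  apply: cont_sum => l v.
  pose F := fun v : 'rV[R]_(N * L) => Num.max c (\sum_j vec_mx v j l).
  have HF : {for v, continuous F}.
    apply: (@continuous_max _ _ (fun=> c) (fun v : 'rV[R]_(N * L) => \sum_j vec_mx v j l)).
      exact: cst_continuous.
    by apply: cont_sum => j; exact: cont_coord.
  have Hln : {for F v, continuous (@ln R)}.
    by apply: continuous_ln; rewrite lt_max c0.
  exact: (continuous_comp HF Hln).
pose Av := [set v : 'rV[R]_(N * L) | cvx_feasible d xh nuh x eps (vec_mx v)].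
have Avc : closed Av.
  have -> : Av = (\bigcap_(j in setT) \bigcap_(l in setT) [set v | 0 <= vec_mx v j l]) `&`
     ([set v | (\sum_(j < N) \sum_(l < L) d (xh j) (x l) * vec_mx v j l) <= eps] `&`
      \bigcap_(j in setT) [set v | \sum_(l < L) vec_mx v j l <= nuh j]).
    apply/seteqP; split => v /=.
      by move=> [H1 [H2 H3]]; split; [move=> j _ l _; exact: H1|split=> // j _; exact: H3].
    by move=> [H1 [H2 H3]]; split; [move=> j l; exact: H1|split=> // j; exact: H3].
  apply: closedI; first (apply: closed_bigI => j _; apply: closed_bigI => l _).
    have h1 := @closed_pre R _ (fun v : 'rV[R]_(N * L) => vec_mx v j l) _ (@cont_coord R N L j l) (@closed_ge R 0).
    exact: h1.
  apply: closedI.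
    apply: closed_pre (@closed_le R _).
    apply: cont_sum => j; apply: cont_sum => l v.
    by apply: continuousM; [exact: cst_continuous | exact: cont_coord].
  apply: closed_bigI => j _; apply: closed_pre (@closed_le R _).
  by apply: cont_sum => l; exact: cont_coord.
have Avk : compact Av.
  apply: subclosed_compact Avc (rV_compact (fun=> @segment_compact R 0 1)) _.
  move=> v [H1 [_ H3]] i; case/mxvec_indexP: i => j l.
  have -> : v ord0 (mxvec_index j l) = vec_mx v j l by rewrite -{1}(vec_mxK v) mxvecE.
  rewrite /= in_itv /= H1 /=; apply: le_trans (nuh1 j); apply: le_trans (H3 j).
  by rewrite (bigD1 l) //= lerDl sumr_ge0 // => *; exact: H1.
have Av0 : Av !=set0 by exists (mxvec T0); rewrite /Av /= mxvecK.
have [vs vsA vsmax] := EVT_max_rV Av0 Avk (@continuous_subspaceT _ _ Av g gc).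
have vsA' : Av vs by rewrite inE in vsA.
pose Topt := vec_mx vs.
have Gmax T : cvx_feasible d xh nuh x eps T -> G T <= G Topt.
  move=> Tf; have := vsmax (mxvec T); rewrite /g mxvecK; apply.
  by rewrite inE /Av /= mxvecK.
have colc l : c <= \sum_j Topt j l.
  rewrite leNgt; apply/negP => hl.
  have H1 : G Topt <= ln c.
    rewrite /G (bigD1 l) //= (max_l (ltW hl)).
    have : \sum_(i < L | i != l) ln (Num.max c (\sum_j Topt j i)) <= \sum_(i < L | i != l) (0:R).
      apply: ler_sum => i _; apply: ln_le0; rewrite ge_max c1 /=.
      exact: (@colsum_le1 _ _ d N L xh nuh x eps Topt Hs vsA' i).
    rewrite big1_eq => h; lra.
  have H2 : G T0 = ln (s0 ^+ L).
    rewrite /G; under eq_bigr do rewrite colT0 max_r //.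
    by rewrite sumr_const card_ord lnXn.
  have H3 := Gmax T0 T0f.
  have H4 : ln c < ln (s0 ^+ L) by rewrite ltr_ln ?posrE.
  lra.
have objE : cvx_obj Topt = (G Topt)%:E.
  rewrite /cvx_obj /G -sumEFin; apply: eq_bigr => l _.
  by rewrite /elog (lt_le_trans c0 (colc l)) max_r.
have objle T : (cvx_obj T <= (G T)%:E)%E.
  rewrite /cvx_obj /G -sumEFin; apply: lee_sum => l _; rewrite /elog.
  case: ifP => h; last exact: leNye.
  by rewrite lee_fin ler_ln ?posrE ?le_max ?lexx ?orbT // lt_max h orbT.
exists Topt; split => //.
  by move=> l; exact: (lt_le_trans c0 (colc l)).
move=> T Tf; rewrite objE; apply: le_trans (objle T) _.
by rewrite lee_fin; exact: Gmax.
Qed.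
Lemma pair_delta (R : realType) (T1 T2 : eqType) (a u : T1) (b v : T2) :
  ((a == u)%:R * (b == v)%:R : R) = ((a, b) == (u, v))%:R.
Proof.
by rewrite xpair_eqE; case: (a == u); case: (b == v); rewrite /= ?mulr1 ?mul0r ?mulr0.
Qed.

Lemma lower (R : realType) m (X : set 'rV[R]_m) d N L xh nuh x eps (T : 'M[R]_(N, L)) :
  is_metric_on X d -> (forall j, X (xh j)) -> (forall l, X (x l)) -> injective x ->
  \sum_(j < N) nuh j = 1 -> cvx_feasible d xh nuh x eps T ->
  (forall l, 0 < \sum_j T j l) ->
  exists2 nu, wass_ball X d x (discrete_pmf xh nuh) eps nu &
    \sum_l ln (\sum_j T j l) <= \sum_l ln (nu (x l)).
Proof.
move=> [dge0 [d0 [dsym _]]] xhX xX xinj Hs [T0 [Tc Tr]] Tpos.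
pose r j := nuh j - \sum_l T j l.
have r0 j : 0 <= r j by rewrite subr_ge0.
pose nu t := \sum_(p : 'I_N * 'I_L) T p.1 p.2 * (t == x p.2)%:R
           + \sum_j r j * (t == xh j)%:R.
pose lam a b := \sum_(p : 'I_N * 'I_L) T p.1 p.2 * (a == x p.2)%:R * (b == xh p.1)%:R
           + \sum_j r j * (a == xh j)%:R * (b == xh j)%:R.
have sumT : \sum_(p : 'I_N * 'I_L) T p.1 p.2 = \sum_j \sum_l T j l.
  by rewrite pair_big /=.
have nuxl l : \sum_j T j l <= nu (x l).
  have E : \sum_(p : 'I_N * 'I_L) T p.1 p.2 * (x l == x p.2)%:R = \sum_j T j l.
    rewrite (eq_bigr (fun p => T p.1 p.2 * (l == p.2)%:R)); last first.
      by move=> p _; rewrite (inj_eq xinj).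
    rewrite -(pair_big xpredT xpredT (fun j l' => T j l' * (l == l')%:R)) /=.
    apply: eq_bigr => j _.
    rewrite (bigD1 l) //= eqxx mulr1 big1 ?addr0 // => l' /negPf.
    by rewrite eq_sym => ->; rewrite mulr0.
  rewrite /nu E lerDl sumr_ge0 // => j _; exact: mulr_ge0.
have nu0 t : 0 <= nu t.
  by rewrite addr_ge0 // sumr_ge0 // => *; exact: mulr_ge0.
have nuX t : ~ X t -> nu t = 0.
  move=> Xt; rewrite /nu !big1 ?addr0 // => [p _|j _]; case: eqP => [e|_];
    rewrite ?mulr0 //; by move: Xt; rewrite e.
have sumr : \sum_(p : 'I_N * 'I_L) T p.1 p.2 + \sum_j r j = 1.
  rewrite sumT -big_split /= -Hs; apply: eq_bigr => j _.
  by rewrite /r addrC subrK.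
have pmf : is_pmf X nu.
  split => //; split => //.
  under eq_esum do rewrite EFinD.
  rewrite esumD; last 2 first.
  - by move=> t _; rewrite lee_fin sumr_ge0 // => *; exact: mulr_ge0.
  - by move=> t _; rewrite lee_fin sumr_ge0 // => *; exact: mulr_ge0.
  rewrite (@esum_deltas R _ X _ (fun p : 'I_N * 'I_L => x p.2) (fun p => T p.1 p.2)) //.
  rewrite (@esum_deltas R _ X _ xh r) //.
  by rewrite -EFinD sumr.
have lam0 a b : 0 <= lam a b.
  by rewrite addr_ge0 // sumr_ge0 // => *; rewrite !mulr_ge0.
have lamC a b : lam a b = \sum_(p : 'I_N * 'I_L) T p.1 p.2 * (b == xh p.1)%:R * (a == x p.2)%:R
    + \sum_j r j * (b == xh j)%:R * (a == xh j)%:R.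
  by rewrite /lam; congr (_ + _); apply: eq_bigr => *; rewrite mulrAC.
have coup : is_coupling X nu (discrete_pmf xh nuh) lam.
  split => //; split.
    move=> a b H; rewrite /lam !big1 ?addr0 // => [p _|j _];
      (case: eqP => [ea|_]; last by rewrite ?mulr0 ?mul0r);
      (case: eqP => [eb|_]; last by rewrite ?mulr0 ?mul0r);
      by exfalso; apply: H; rewrite ea eb.
  split.
    move=> a; rewrite /lam; under eq_esum do rewrite EFinD.
    rewrite esumD; last 2 first.
    - by move=> t _; rewrite lee_fin sumr_ge0 // => *; rewrite !mulr_ge0.
    - by move=> t _; rewrite lee_fin sumr_ge0 // => *; rewrite !mulr_ge0.
    rewrite (@esum_deltas R _ X _ (fun p : 'I_N * 'I_L => xh p.1) (fun p => T p.1 p.2 * (a == x p.2)%:R)) //; last first.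
      by move=> p; rewrite mulr_ge0.
    rewrite (@esum_deltas R _ X _ xh (fun j => r j * (a == xh j)%:R)) //; last first.
      by move=> j; rewrite mulr_ge0.
  move=> b; under eq_esum do rewrite lamC EFinD.
  rewrite esumD; last 2 first.
  - by move=> t _; rewrite lee_fin sumr_ge0 // => *; rewrite !mulr_ge0.
  - by move=> t _; rewrite lee_fin sumr_ge0 // => *; rewrite !mulr_ge0.
  rewrite (@esum_deltas R _ X _ (fun p : 'I_N * 'I_L => x p.2) (fun p => T p.1 p.2 * (b == xh p.1)%:R)) //; last first.
    by move=> p; rewrite mulr_ge0.
  rewrite (@esum_deltas R _ X _ xh (fun j => r j * (b == xh j)%:R)) //; last first.
    by move=> j; rewrite mulr_ge0.
  rewrite -EFinD; congr (_%:E).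
  rewrite -(pair_big xpredT xpredT (fun j l => T j l * (b == xh j)%:R)) /=.
  rewrite -big_split /= /discrete_pmf [RHS]big_mkcond /=; apply: eq_bigr => j _.
  rewrite -mulr_suml -mulrDl /r addrC subrK eq_sym.
  by case: eqP; rewrite ?mulr1 ?mulr0.
have cost : (coupling_cost X d lam <= eps%:E)%E.
  rewrite /coupling_cost.
  rewrite (eq_esum (b := fun q => (\sum_(p : 'I_N * 'I_L) (d (x p.2) (xh p.1) * T p.1 p.2) * (q == (x p.2, xh p.1))%:R)%:E
      + (\sum_j (d (xh j) (xh j) * r j) * (q == (xh j, xh j))%:R)%:E)); last first.
    move=> [a b] /= _; rewrite -EFinD; congr (_%:E).
    rewrite /lam mulrDr !mulr_sumr; congr (_ + _); apply: eq_bigr => p _;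
      rewrite -mulrA pair_delta; case: eqP => [[-> ->]|_]; by rewrite ?mulr1 ?mulr0.
  rewrite esumD; last 2 first.
  - move=> [a b] [Xa Xb]; rewrite lee_fin sumr_ge0 // => p _.
    by rewrite !mulr_ge0 ?dge0.
  - move=> [a b] [Xa Xb]; rewrite lee_fin sumr_ge0 // => j _.
    by rewrite !mulr_ge0 ?dge0.
  rewrite (@esum_deltas R _ (X `*` X) _ (fun p : 'I_N * 'I_L => (x p.2, xh p.1))
     (fun p => d (x p.2) (xh p.1) * T p.1 p.2)); last 2 first.
  - by move=> p; exact: (conj (xX _) (xhX _)).
  - by move=> p; rewrite mulr_ge0 ?dge0.
  rewrite (@esum_deltas R _ (X `*` X) _ (fun j => (xh j, xh j))
     (fun j => d (xh j) (xh j) * r j)); last 2 first.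
  - by move=> j; exact: (conj (xhX _) (xhX _)).
  - by move=> j; rewrite mulr_ge0 ?dge0.
  have dz : \sum_j d (xh j) (xh j) * r j = 0.
    by apply: big1 => j _; rewrite (proj2 (d0 _ _ (xhX j) (xhX j))) ?mul0r.
  rewrite -EFinD lee_fin dz addr0.
  apply: le_trans Tc.
  rewrite -(pair_big xpredT xpredT (fun j l => d (x l) (xh j) * T j l)) /=.
  by apply: ler_sum => j _; apply: ler_sum => l _; rewrite dsym.
exists nu.
  split => //; split.
    by move=> l; apply: lt_le_trans (Tpos l) (nuxl l).
  apply: le_trans cost.
  by apply: ereal_inf_lbound; exists lam.
apply: ler_sum => l _; have h := lt_le_trans (Tpos l) (nuxl l).
by rewrite ler_ln ?posrE ?nuxl ?Tpos.
Qed.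
Lemma upper (R : realType) m (X : set 'rV[R]_m) d N L xh nuh (x : 'I_L -> 'rV[R]_m) eps nu th :
  is_metric_on X d -> injective xh -> (forall j, X (xh j)) -> (forall l, X (x l)) ->
  injective x -> 0 < eps -> 0 < th -> th < 1 ->
  wass_ball X d x (discrete_pmf xh nuh) eps nu ->
  exists T : 'M[R]_(N, L), [/\ cvx_feasible d xh nuh x eps T,
    (forall l, 0 < \sum_j T j l) &
    \sum_l ln (nu (x l)) + L%:R * ln th <= \sum_l ln (\sum_j T j l)].
Proof.
move=> [dge0 [d0 [dsym _]]] xhinj xhX xX xinj eps0 th0 th1 [pmf [nupos W]].
have : (wass X d nu (discrete_pmf xh nuh) < (eps / th)%:E)%E.
  apply: le_lt_trans W _; rewrite lte_fin ltr_pdivlMr //; nra.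
case/ereal_inf_lt => _ [lam [[lam0 [lamX [m1 m2]]] ->]] clt.
pose T : 'M[R]_(N, L) := \matrix_(j, l) (th * lam (x l) (xh j)).
have Tjl j l : T j l = th * lam (x l) (xh j) by rewrite mxE.
have disc_xh j : discrete_pmf xh nuh (xh j) = nuh j.
  by rewrite /discrete_pmf (big_pred1 j) // => k /=; rewrite (inj_eq xhinj).
have disc_out y : (forall k, xh k <> y) -> discrete_pmf xh nuh y = 0.
  by move=> H; rewrite /discrete_pmf big_pred0 // => k; apply/eqP/H.
have rowle j : \sum_l lam (x l) (xh j) <= nuh j.
  have := @esum_fin_lb R _ X _ x (fun t => lam t (xh j)) xinj xX (fun t _ => lam0 t (xh j)).
  by rewrite m2 disc_xh lee_fin.
have nule l : nu (x l) <= \sum_j lam (x l) (xh j).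
  rewrite -lee_fin -m1 -(@esum_deltas R _ X _ xh (fun j => lam (x l) (xh j))) //.
  apply: le_esum => y Xy; rewrite lee_fin.
  have [H1 H2] := @sum_delta_inj R _ _ xh (fun j => lam (x l) (xh j)) y xhinj (fun j => lam0 _ _).
  have [[k e]|ne] := pselect (exists k, xh k = y).
    by rewrite (H1 k e) e.
  rewrite H2; last by move=> k e; apply: ne; exists k.
  have : ((lam (x l) y)%:E <= (discrete_pmf xh nuh y)%:E)%E.
    rewrite -m2; apply: esum_ge; exists [set x l].
      by split; [exact: finite_set1 | move=> t ->; exact: xX].
    by rewrite fsbig_set1.
  by rewrite disc_out ?lee_fin // => k e; apply: ne; exists k.
have zinj : injective (fun p : 'I_N * 'I_L => (x p.2, xh p.1)).
  by move=> [j l] [j' l'] /= [] /xinj -> /xhinj ->.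
have lb := @esum_fin_lb R _ (X `*` X) _ (fun p : 'I_N * 'I_L => (x p.2, xh p.1))
  (fun q => d q.1 q.2 * lam q.1 q.2) zinj (fun p => conj (xX _) (xhX _))
  (fun q Xq => mulr_ge0 (dge0 _ _ Xq.1 Xq.2) (lam0 _ _)).
pose C := \sum_(p : 'I_N * 'I_L) d (x p.2) (xh p.1) * lam (x p.2) (xh p.1).
have Clt : C * th < eps.
  rewrite -ltr_pdivlMr // -lte_fin; apply: le_lt_trans clt; exact: lb.
have CE : \sum_j \sum_l d (xh j) (x l) * T j l = th * C.
  rewrite /C -(pair_big xpredT xpredT (fun j l => d (x l) (xh j) * lam (x l) (xh j))) /=.
  rewrite mulr_sumr; apply: eq_bigr => j _; rewrite mulr_sumr; apply: eq_bigr => l _.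
  by rewrite Tjl dsym // mulrCA.
have colE l : \sum_j T j l = th * \sum_j lam (x l) (xh j).
  by rewrite mulr_sumr; apply: eq_bigr => j _; rewrite Tjl.
have colpos l : 0 < \sum_j T j l.
  rewrite colE mulr_gt0 //; exact: lt_le_trans (nupos l) (nule l).
exists T; split => //.
  split; first by move=> j l; rewrite Tjl mulr_ge0 // ltW.
  split; first by rewrite CE; nra.
  move=> j; rewrite (eq_bigr _ (fun l _ => Tjl j l)) -mulr_sumr.
  have S0 : 0 <= \sum_l lam (x l) (xh j) by apply: sumr_ge0.
  have := rowle j; nra.
have Lc : \sum_(l < L) ln th = L%:R * ln th by rewrite sumr_const card_ord mulr_natl.
rewrite -Lc -big_split /=; apply: ler_sum => l _.
rewrite -lnM ?posrE // ler_ln ?posrE ?mulr_gt0 // colE.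
by rewrite mulrC ler_pM2l // nule.
Qed.

Theorem mainTheorem14 (R : realType) (m : nat) (X : set 'rV[R]_m)
    (d : 'rV[R]_m -> 'rV[R]_m -> R) (N L : nat)
    (xh : 'I_N -> 'rV[R]_m) (nuh : 'I_N -> R) (x : 'I_L -> 'rV[R]_m) (eps : R) :
  countable X ->
  is_metric_on X d ->
  injective xh -> (forall j, X (xh j)) ->
  (forall j, 0 < nuh j) -> \sum_(j < N) nuh j = 1 ->
  (forall l, X (x l)) -> injective x ->
  0 < eps ->
  exists2 Topt : 'M[R]_(N, L),
    cvx_feasible d xh nuh x eps Topt /\
    (forall T, cvx_feasible d xh nuh x eps T -> (cvx_obj T <= cvx_obj Topt)%E) &
    ereal_sup [set (\sum_(l < L) ln (nu (x l)))%:E | nu in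
                 wass_ball X d x (discrete_pmf xh nuh) eps] = cvx_obj Topt.
Proof.
move=> cX met xhinj xhX nuh0 Hs xX xinj eps0.
have met' := met; case: met' => [dge0 _].
have dj j l : 0 <= d (xh j) (x l) := dge0 _ _ (xhX j) (xX l).
have [Topt [Tf Tpos Tmax]] := @cvx_opt R m d N L xh nuh x eps dj nuh0 Hs eps0.
exists Topt; first by split.
have objP (T : 'M[R]_(N, L)) : (forall l, 0 < \sum_j T j l) ->
    cvx_obj T = (\sum_l ln (\sum_j T j l))%:E.
  move=> Hp; rewrite /cvx_obj -sumEFin; apply: eq_bigr => l _.
  by rewrite /elog Hp.
pose V := \sum_l ln (\sum_j Topt j l).
rewrite (objP _ Tpos); apply/eqP; rewrite eq_le; apply/andP; split.
  apply: ge_ereal_sup => _ [nu Bnu <-]; rewrite lee_fin.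
  apply/ler_addgt0Pr => eta eta0.
  pose u := eta / (L%:R + 1).
  have u0 : 0 < u by rewrite divr_gt0 // ltr_wpDl.
  have uE : u * (L%:R + 1) = eta by rewrite /u mulfVK // gt_eqF // ltr_wpDl.
  pose th := expR (- u).
  have th0 : 0 < th by exact: expR_gt0.
  have th1 : th < 1 by rewrite expR_lt1 oppr_lt0.
  have [T [Tf' Tpos' Tle]] := @upper R m X d N L xh nuh x eps nu th met xhinj xhX xX xinj eps0 th0 th1 Bnu.
  have := Tmax T Tf'; rewrite (objP _ Tpos') (objP _ Tpos) lee_fin => HT.
  have lnth : ln th = - u by rewrite /th expRK.
  rewrite lnth in Tle.
  have L0 : 0 <= (L%:R : R) by [].
  nra.
have [nu Bnu le] := @lower R m X d N L xh nuh x eps Topt met xhX xX xinj Hs Tf Tpos.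
apply: (@le_trans _ _ (\sum_l ln (nu (x l)))%:E); first by rewrite lee_fin.
by apply: ereal_sup_ubound; exists nu.
Qed.
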